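(* For the two-state-service-rate queue described in the context, assumed positive recurrent, the generating function $g$ satisfies, for all $|z|\le1$, $$u\,g(rz)=-(z-z^+)(z-z^-)\,g(z)-vz+w,$$ where $$z^\pm=\frac{1}{2\lambda}\Bigl(\mu_a+\mu_b+\lambda+\gamma\pm\sqrt{\Delta}\Bigr),\qquad \Delta=(\lambda-\gamma+\mu_a-\mu_b)^2+4\lambda\gamma,$$ and $$\lambda^2u=\lambda_a(\mu_a-\mu_b),\qquad \lambda^2v=(\lambda_a\mu_a+\lambda_b\mu_b)\pi_0,\qquad \lambda^2w=(\mu_a\mu_b+\lambda_a\mu_a+\lambda_b\mu_b+\gamma\mu_a)\pi_0.$$
   Context: Two-state-service-rate queue. Fix parameters $\lambda_a,\lambda_b>0$, $\delta>0$, $\gamma\ge0$, $\mu_a,\mu_b>0$. Set $\lambda=\lambda_a+\lambda_b$, $r=\lambda/(\lambda+\delta)$, and for $n\ge1$, $p_n=\frac{\lambda_a}{\lambda}r^n$ and $\bar p_n=1-p_n$. Consider the continuous-time Markov chain on the state space $\{0\}\cup\{(n,a),(n,b):n\ge1\}$ with the following transitions: from $0$ to $(1,a)$ at rate $\lambda_a$ and to $(1,b)$ at rate $\lambda_b$; for $n\ge1$ and $c\in\{a,b\}$, from $(n,c)$ to $(n+1,c)$ at rate $\lambda$; from $(1,c)$ to $0$ at rate $\mu_c$; for $n\ge1$ and $c\in\{a,b\}$, from $(n+1,c)$ to $(n,a)$ at rate $\mu_c p_n$ and to $(n,b)$ at rate $\mu_c\bar p_n$; for $n\ge1$, from $(n,b)$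 to $(n,a)$ at rate $\gamma$. When the chain is positive recurrent, $\pi$ denotes its stationary distribution and $\pi_0=\pi(0)$, $\pi_n^a=\pi((n,a))$, $\pi_n^b=\pi((n,b))$, $\pi_n=\pi_n^a+\pi_n^b$ for $n\ge1$. Generating functions: $g_a(z)=\sum_{n\ge1}\pi_n^az^n$, $g_b(z)=\sum_{n\ge1}\pi_n^bz^n$, $g(z)=\pi_0+g_a(z)+g_b(z)$. *)

(* Defs.v *)
From Stdlib Require Import Reals Lra.
Open Scope R_scope.

Definition Cplx : Type := (R * R)%type.
Definition RtoC (x : R) : Cplx := (x, 0).
Definition Cadd (z w : Cplx) : Cplx := (fst z + fst w, snd z + snd w).
Definition Cmul (z w : Cplx) : Cplx :=
  (fst z * fst w - snd z * snd w, fst z * snd w + snd z * fst w).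
Definition Copp (z : Cplx) : Cplx := (- fst z, - snd z).
Definition Csub (z w : Cplx) : Cplx := Cadd z (Copp w).
Fixpoint Cpow (z : Cplx) (n : nat) : Cplx :=
  match n with O => (1, 0) | S m => Cmul z (Cpow z m) end.
Definition Cmod (z : Cplx) : R := sqrt (fst z ^ 2 + snd z ^ 2).

Definition Cseries_sum (a : nat -> Cplx) (s : Cplx) : Prop :=
  infinite_sum (fun n => fst (a n)) (fst s) /\
  infinite_sum (fun n => snd (a n)) (snd s).

Definition rr (la lb delta : R) : R := (la + lb) / (la + lb + delta).
Definition pp (la lb delta : R) (n : nat) : R :=
  la / (la + lb) * (rr la lb delta) ^ n.

(** Global balance equations pi Q = 0 of the CTMC described in the paper,
    for the distribution given by pi0 = pi(0), pia n = pi((n,a)),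
    pib n = pi((n,b)) (n >= 1; values at index 0 of pia/pib are unused).
    Outflow rates: from 0: la+lb; from (n,a): lambda + mu_a;
    from (n,b): lambda + mu_b + gamma. *)
Definition balance (la lb delta gamma mua mub : R)
    (pi0 : R) (pia pib : nat -> R) : Prop :=
  let lam := la + lb in
  let p := pp la lb delta in
  lam * pi0 = mua * pia 1%nat + mub * pib 1%nat /\
  (forall n : nat, (1 <= n)%nat ->
     (lam + mua) * pia n =
       (if Nat.eqb n 1 then la * pi0 else lam * pia (n - 1)%nat)
       + p n * (mua * pia (S n) + mub * pib (S n))
       + gamma * pib n) /\
  (forall n : nat, (1 <= n)%nat ->
     (lam + mub + gamma) * pib n =
       (if Nat.eqb n 1 then lb * pi0 else lam * pib (n - 1)%nat)
       + (1 - p n) * (mua * pia (S n) + mub * pib (S n))).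

Definition is_prob (pi0 : R) (pia pib : nat -> R) : Prop :=
  0 <= pi0 /\ (forall n, (1 <= n)%nat -> 0 <= pia n /\ 0 <= pib n) /\
  infinite_sum (fun n => match n with O => pi0 | S _ => pia n + pib n end) 1.

Definition stationary (la lb delta gamma mua mub : R)
    (pi0 : R) (pia pib : nat -> R) : Prop :=
  is_prob pi0 pia pib /\ balance la lb delta gamma mua mub pi0 pia pib.

Definition gcoef (pi0 : R) (pia pib : nat -> R) (n : nat) : R :=
  match n with O => pi0 | S _ => pia n + pib n end.

Definition gterm (pi0 : R) (pia pib : nat -> R) (z : Cplx) (n : nat) : Cplx :=
  Cmul (RtoC (gcoef pi0 pia pib n)) (Cpow z n).

Definition Delta (la lb gamma mua mub : R) : R :=
  (la + lb - gamma + mua - mub) ^ 2 + 4 * (la + lb) * gamma.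
Definition zplus (la lb gamma mua mub : R) : R :=
  (mua + mub + (la + lb) + gamma + sqrt (Delta la lb gamma mua mub)) / (2 * (la + lb)).
Definition zminus (la lb gamma mua mub : R) : R :=
  (mua + mub + (la + lb) + gamma - sqrt (Delta la lb gamma mua mub)) / (2 * (la + lb)).
Definition uu (la lb mua mub : R) : R := la * (mua - mub) / (la + lb) ^ 2.
Definition vv (la lb mua mub pi0 : R) : R := (la * mua + lb * mub) * pi0 / (la + lb) ^ 2.
Definition ww (la lb gamma mua mub pi0 : R) : R :=
  (mua * mub + la * mua + lb * mub + gamma * mua) * pi0 / (la + lb) ^ 2.

(* Main.v *)
From Pilot Require Import Defs.
From Stdlib Require Import Reals.
From Stdlib Require Import Lra Psatz.
From Coquelicot Require Import Coquelicot.
Import Pilot.Defs.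
Open Scope R_scope.

Lemma flux la lb delta gamma mua mub pi0 pia pib :
  balance la lb delta gamma mua mub pi0 pia pib ->
  forall n, (la+lb) * gcoef pi0 pia pib n = mua * pia (S n) + mub * pib (S n).
Proof.
  intros [h0 [ha hb]] n. induction n as [|n IH].
  - simpl. lra.
  - pose proof (ha (S n) ltac:(lia)) as ha'.
    pose proof (hb (S n) ltac:(lia)) as hb'.
    set (p := pp la lb delta (S n)) in *.
    simpl gcoef in *.
    destruct n as [|k].
    + simpl in ha', hb'. simpl gcoef in IH. nra.
    + simpl in ha', hb'. simpl gcoef in IH. nra.
Qed.

Definition ecoef la lb gamma mua mub pi0 (pia pib : nat -> R) (n : nat) : R :=
  let c := gcoef pi0 pia pib in
  let s := zplus la lb gamma mua mub + zminus la lb gamma mua mub in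
  let p := zplus la lb gamma mua mub * zminus la lb gamma mua mub in
  match n with
  | O => - p * c O + ww la lb gamma mua mub pi0
  | S O => s * c O - p * c 1%nat - vv la lb mua mub pi0
  | S (S m as k) => - c m + s * c k - p * c n
  end.

Lemma zsum la lb gamma mua mub : 0 < la + lb ->
  zplus la lb gamma mua mub + zminus la lb gamma mua mub
  = (mua + mub + (la+lb) + gamma) / (la + lb).
Proof. intros H. unfold zplus, zminus. field. lra. Qed.

Lemma zprod la lb gamma mua mub : 0 < la + lb -> 0 <= gamma ->
  zplus la lb gamma mua mub * zminus la lb gamma mua mub
  = ((la+lb) * mub + mua * mub + gamma * mua) / (la + lb)^2.
Proof.
  intros H Hg. unfold zplus, zminus.
  assert (HD : 0 <= Defs.Delta la lb gamma mua mub).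
  { unfold Defs.Delta. apply Rplus_le_le_0_compat; [apply pow2_ge_0|]. apply Rmult_le_pos; lra. }
  pose proof (sqrt_sqrt _ HD) as Hs.
  set (q := sqrt (Defs.Delta la lb gamma mua mub)) in *.
  replace ((mua + mub + (la + lb) + gamma + q) / (2 * (la + lb)) *
   ((mua + mub + (la + lb) + gamma - q) / (2 * (la + lb))))
  with (((mua + mub + (la + lb) + gamma)^2 - q*q) / (4 * (la + lb)^2)) by (field; lra).
  rewrite Hs. unfold Defs.Delta. field. lra.
Qed.

Lemma coef_key la lb delta gamma mua mub pi0 pia pib :
  0 < la -> 0 < lb -> 0 < delta -> 0 <= gamma ->
  balance la lb delta gamma mua mub pi0 pia pib ->
  forall n, (mua - mub) * (la * rr la lb delta ^ n * gcoef pi0 pia pib n) =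
    (la+lb)^2 * ecoef la lb gamma mua mub pi0 pia pib n.
Proof.
  intros Hla Hlb Hd Hg Hb n.
  pose proof (flux _ _ _ _ _ _ _ _ _ Hb) as Hf.
  destruct Hb as [h0 [ha hb]].
  assert (HL : 0 < la + lb) by lra.
  unfold ecoef. cbv zeta.
  rewrite (zsum _ _ _ _ _ HL), (zprod _ _ _ _ _ HL Hg).
  destruct n as [|[|m]].
  - simpl. unfold ww. field. lra.
  - pose proof (ha 1%nat ltac:(lia)) as E. pose proof (Hf 1%nat) as F1. pose proof (Hf 0%nat) as F0.
    simpl in E. simpl gcoef in *. rewrite <- F1 in E.
    set (A := pia 1%nat) in *. set (B := pib 1%nat) in *.
    set (X := la * rr la lb delta ^ 1 * (A + B)).
    assert (EX : pp la lb delta 1 * ((la + lb) * (A + B)) = X).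
    { unfold X, pp. field. lra. }
    rewrite EX in E.
    assert (E1 : (la+lb+mua)*A - la*pi0 - X - gamma*B = 0) by lra.
    assert (F2 : (la+lb)*pi0 - (mua*A + mub*B) = 0) by lra.
    unfold vv.
    assert (P : (mua-mub)*X = (la+lb)*(mua+mub+(la+lb)+gamma)*pi0
       - ((la+lb)*mub + mua*mub + gamma*mua)*(A+B) - (la*mua+lb*mub)*pi0).
    { apply Rminus_diag_uniq.
      replace ((mua-mub)*X - ((la+lb)*(mua+mub+(la+lb)+gamma)*pi0
       - ((la+lb)*mub + mua*mub + gamma*mua)*(A+B) - (la*mua+lb*mub)*pi0))
      with (-(mua-mub)*((la+lb+mua)*A - la*pi0 - X - gamma*B)
            - (mua+la+lb+gamma)*((la+lb)*pi0 - (mua*A + mub*B))) by ring.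
      rewrite E1, F2. ring. }
    rewrite P. field. lra.
  - pose proof (ha (S (S m)) ltac:(lia)) as E. pose proof (Hf (S (S m))) as F.
    pose proof (Hf (S m)) as F1. pose proof (Hf m) as F0.
    simpl in E. simpl gcoef in F, F1. rewrite <- F in E.
    set (A := pia (S (S m))) in *. set (B := pib (S (S m))) in *.
    set (A1 := pia (S m)) in *. set (B1 := pib (S m)) in *.
    set (C0 := gcoef pi0 pia pib m) in *.
    simpl gcoef. fold A B A1 B1.
    set (X := la * rr la lb delta ^ S (S m) * (A + B)).
    assert (EX : pp la lb delta (S (S m)) * ((la + lb) * (A + B)) = X).
    { unfold X, pp. field. lra. }
    rewrite EX in E.
    assert (E1 : (la+lb+mua)*A - (la+lb)*A1 - X - gamma*B = 0) by lra.
    assert (F2 : (la+lb)*(A1+B1) - (mua*A + mub*B) = 0) by lra.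
    assert (F3 : (la+lb)*C0 - (mua*A1 + mub*B1) = 0) by lra.
    assert (P : (mua-mub)*X = - (la+lb)^2 * C0 + (la+lb)*(mua+mub+(la+lb)+gamma)*(A1+B1)
       - ((la+lb)*mub + mua*mub + gamma*mua)*(A+B)).
    { apply Rminus_diag_uniq.
      replace ((mua-mub)*X - (- (la+lb)^2 * C0 + (la+lb)*(mua+mub+(la+lb)+gamma)*(A1+B1)
       - ((la+lb)*mub + mua*mub + gamma*mua)*(A+B)))
      with (-(mua-mub)*((la+lb+mua)*A - (la+lb)*A1 - X - gamma*B)
            + (la+lb)*((la+lb)*C0 - (mua*A1 + mub*B1))
            - (mua+la+lb+gamma)*((la+lb)*(A1+B1) - (mua*A + mub*B))) by ring.
      rewrite E1, F2, F3. ring. }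
    rewrite P. field. lra.
Qed.

Lemma coef la lb delta gamma mua mub pi0 pia pib :
  0 < la -> 0 < lb -> 0 < delta -> 0 <= gamma ->
  balance la lb delta gamma mua mub pi0 pia pib ->
  forall n, uu la lb mua mub * (gcoef pi0 pia pib n * rr la lb delta ^ n) =
    ecoef la lb gamma mua mub pi0 pia pib n.
Proof.
  intros Hla Hlb Hd Hg Hb n.
  pose proof (coef_key _ _ _ _ _ _ _ _ _ Hla Hlb Hd Hg Hb n) as K.
  unfold uu.
  replace (la * (mua - mub) / (la + lb) ^ 2 * (gcoef pi0 pia pib n * rr la lb delta ^ n))
    with ((mua - mub) * (la * rr la lb delta ^ n * gcoef pi0 pia pib n) / (la+lb)^2)
    by (field; lra).
  rewrite K. field. lra.
Qed.

Lemma Rs_plus a b l1 l2 : infinite_sum a l1 -> infinite_sum b l2 ->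
  infinite_sum (fun n => a n + b n) (l1 + l2).
Proof.
  intros H1 H2. apply is_series_Reals. apply is_series_Reals in H1, H2.
  exact (is_series_plus _ _ _ _ H1 H2).
Qed.

Lemma Rs_scal c a l : infinite_sum a l -> infinite_sum (fun n => c * a n) (c * l).
Proof.
  intros H. apply is_series_Reals. apply is_series_Reals in H.
  exact (is_series_scal c _ _ H).
Qed.

Lemma Rs_ext a b l : (forall n, a n = b n) -> infinite_sum a l -> infinite_sum b l.
Proof.
  intros E H. apply is_series_Reals. apply is_series_Reals in H.
  exact (is_series_ext _ _ _ E H).
Qed.

Lemma Rs_shift a l : infinite_sum a l ->
  infinite_sum (fun n => match n with O => 0 | S m => a m end) l.
Proof.
  intros H. apply is_series_Reals. apply is_series_Reals in H.
  apply is_series_decr_1. change (plus l (opp 0)) with (l + - 0). rewrite Ropp_0, Rplus_0_r. exact H.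
Qed.

Lemma Rs_zero : infinite_sum (fun _ => 0) 0.
Proof.
  intros eps He. exists 0%nat. intros n _.
  assert (Z : sum_f_R0 (fun _ => 0) n = 0).
  { induction n as [|n IH]; simpl; [reflexivity | rewrite IH; ring]. }
  rewrite Z. unfold R_dist. rewrite Rminus_0_r, Rabs_R0. exact He.
Qed.

Lemma Rs_delta0 x : infinite_sum (fun n => match n with O => x | S _ => 0 end) x.
Proof.
  apply is_series_Reals. apply is_series_decr_1. change (plus x (opp x)) with (x + - x). rewrite Rplus_opp_r.
  apply is_series_Reals. exact Rs_zero.
Qed.

Lemma Cs_ext a b s : (forall n, a n = b n) -> Cseries_sum a s -> Cseries_sum b s.
Proof.
  intros E [H1 H2]. split; eapply Rs_ext; [| exact H1 | | exact H2];
  intros n; simpl; rewrite E; reflexivity.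
Qed.

Lemma Cs_val a s t : Cseries_sum a s -> s = t -> Cseries_sum a t.
Proof. intros H ->; exact H. Qed.

Lemma Cs_add a b s t : Cseries_sum a s -> Cseries_sum b t ->
  Cseries_sum (fun n => Cadd (a n) (b n)) (Cadd s t).
Proof.
  intros [H1 H2] [H3 H4]. split; simpl; apply Rs_plus; assumption.
Qed.

Lemma Cs_mul w a s : Cseries_sum a s ->
  Cseries_sum (fun n => Cmul w (a n)) (Cmul w s).
Proof.
  intros [H1 H2]. unfold Cmul. split; simpl.
  - pose proof (Rs_plus _ _ _ _ (Rs_scal (fst w) _ _ H1) (Rs_scal (- snd w) _ _ H2)) as H.
    eapply Rs_ext; [| replace (fst w * fst s - snd w * snd s) with
       (fst w * fst s + - snd w * snd s) by ring; exact H].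
    intros n; simpl; ring.
  - pose proof (Rs_plus _ _ _ _ (Rs_scal (fst w) _ _ H2) (Rs_scal (snd w) _ _ H1)) as H.
    eapply Rs_ext; [| exact H]. intros n; simpl; ring.
Qed.

Lemma Cs_opp a s : Cseries_sum a s -> Cseries_sum (fun n => Copp (a n)) (Copp s).
Proof.
  intros [H1 H2]. unfold Copp. split; simpl.
  - eapply Rs_ext; [| replace (- fst s) with (-1 * fst s) by ring; exact (Rs_scal (-1) _ _ H1)].
    intros n; simpl; ring.
  - eapply Rs_ext; [| replace (- snd s) with (-1 * snd s) by ring; exact (Rs_scal (-1) _ _ H2)].
    intros n; simpl; ring.
Qed.

Definition Cshift (a : nat -> Cplx) (n : nat) : Cplx :=
  match n with O => (0, 0) | S m => a m end.

Lemma Cs_shift a s : Cseries_sum a s -> Cseries_sum (Cshift a) s.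
Proof.
  intros [H1 H2]. split.
  - eapply Rs_ext; [| exact (Rs_shift _ _ H1)]. intros [|n]; reflexivity.
  - eapply Rs_ext; [| exact (Rs_shift _ _ H2)]. intros [|n]; reflexivity.
Qed.

Definition Cdelta0 (x : Cplx) (n : nat) : Cplx :=
  match n with O => x | S _ => (0, 0) end.

Lemma Cs_delta0 x : Cseries_sum (Cdelta0 x) x.
Proof.
  split.
  - eapply Rs_ext; [| exact (Rs_delta0 (fst x))]. intros [|n]; reflexivity.
  - eapply Rs_ext; [| exact (Rs_delta0 (snd x))]. intros [|n]; reflexivity.
Qed.

Lemma Cs_unique a s t : Cseries_sum a s -> Cseries_sum a t -> s = t.
Proof.
  intros [H1 H2] [H3 H4]. destruct s, t. simpl in *.
  f_equal; eapply uniqueness_sum; eassumption.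
Qed.

Definition N2 (w : Cplx) : R := fst w ^ 2 + snd w ^ 2.

Lemma N2_mul a b : N2 (Cmul a b) = N2 a * N2 b.
Proof. unfold N2, Cmul; simpl; ring. Qed.

Lemma N2_pos a : 0 <= N2 a.
Proof. unfold N2. pose proof (pow2_ge_0 (fst a)). pose proof (pow2_ge_0 (snd a)). lra. Qed.

Lemma N2_pow w n : N2 w <= 1 -> N2 (Cpow w n) <= 1.
Proof.
  intros H. induction n as [|n IH].
  - unfold N2; simpl; lra.
  - simpl Cpow. rewrite N2_mul. pose proof (N2_pos w). pose proof (N2_pos (Cpow w n)). nra.
Qed.

Lemma comp_bound v : N2 v <= 1 -> Rabs (fst v) <= 1 /\ Rabs (snd v) <= 1.
Proof.
  unfold N2. intros H. pose proof (pow2_ge_0 (fst v)). pose proof (pow2_ge_0 (snd v)).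
  split; apply Rabs_le; split; nra.
Qed.

Lemma gcoef_pos pi0 pia pib : is_prob pi0 pia pib -> forall n, 0 <= gcoef pi0 pia pib n.
Proof.
  intros [H0 [Hn _]] [|n]; simpl; [exact H0|].
  destruct (Hn (S n) ltac:(lia)). lra.
Qed.

Lemma ex_comp pi0 pia pib (f : nat -> R) :
  is_prob pi0 pia pib -> (forall n, Rabs (f n) <= 1) ->
  exists s, infinite_sum (fun n => gcoef pi0 pia pib n * f n) s.
Proof.
  intros HP Hf.
  assert (Hc : ex_series (gcoef pi0 pia pib)).
  { destruct HP as [_ [_ Hs]]. exists 1. apply is_series_Reals.
    eapply Rs_ext; [| exact Hs]. intros [|n]; reflexivity. }
  assert (He : ex_series (fun n => gcoef pi0 pia pib n * f n)).
  { apply (@ex_series_le R_AbsRing R_CompleteNormedModule _ (gcoef pi0 pia pib)); [|exact Hc].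
    intros n. change (Rabs (gcoef pi0 pia pib n * f n) <= gcoef pi0 pia pib n).
    rewrite Rabs_mult, Rabs_pos_eq by (apply gcoef_pos; exact HP).
    pose proof (gcoef_pos _ _ _ HP n). specialize (Hf n).
    pose proof (Rabs_pos (f n)). nra. }
  exists (Series (fun n => gcoef pi0 pia pib n * f n)).
  apply is_series_Reals. apply Series_correct. exact He.
Qed.

Lemma gconv pi0 pia pib w : is_prob pi0 pia pib -> N2 w <= 1 ->
  exists s, Cseries_sum (gterm pi0 pia pib w) s.
Proof.
  intros HP Hw.
  destruct (ex_comp pi0 pia pib (fun n => fst (Cpow w n)) HP) as [s1 H1].
  { intros n. apply comp_bound. apply N2_pow. exact Hw. }
  destruct (ex_comp pi0 pia pib (fun n => snd (Cpow w n)) HP) as [s2 H2].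
  { intros n. apply comp_bound. apply N2_pow. exact Hw. }
  exists (s1, s2). split.
  - eapply Rs_ext; [| exact H1]. intros n. unfold gterm, Cmul, RtoC. simpl. ring.
  - eapply Rs_ext; [| exact H2]. intros n. unfold gterm, Cmul, RtoC. simpl. ring.
Qed.

Ltac cring := unfold Cmul, Cadd, Copp, Csub, RtoC; simpl; f_equal; ring.

Lemma Cpow_scal r z n :
  Cpow (Cmul (RtoC r) z) n = Cmul (RtoC (r ^ n)) (Cpow z n).
Proof.
  induction n as [|n IH]; simpl Cpow.
  - cring.
  - rewrite IH. destruct (Cpow z n) as [x y]. destruct z as [a b]. cring.
Qed.

Theorem proposition2 (la lb delta gamma mua mub : R)
  (Hla : 0 < la) (Hlb : 0 < lb) (Hdelta : 0 < delta) (Hgamma : 0 <= gamma)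
  (Hmua : 0 < mua) (Hmub : 0 < mub)
  (pi0 : R) (pia pib : nat -> R)
  (Hstat : stationary la lb delta gamma mua mub pi0 pia pib)
  (z : Cplx) (Hz : Cmod z <= 1) :
  exists gz grz : Cplx,
    Cseries_sum (gterm pi0 pia pib z) gz /\
    Cseries_sum (gterm pi0 pia pib (Cmul (RtoC (rr la lb delta)) z)) grz /\
    Cmul (RtoC (uu la lb mua mub)) grz =
      Cadd (Csub (Copp (Cmul (Cmul (Csub z (RtoC (zplus la lb gamma mua mub)))
                                  (Csub z (RtoC (zminus la lb gamma mua mub)))) gz))
                 (Cmul (RtoC (vv la lb mua mub pi0)) z))
           (RtoC (ww la lb gamma mua mub pi0)).
Proof.
  destruct Hstat as [HP Hb].
  assert (Hz2 : N2 z <= 1).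
  { unfold Cmod in Hz. pose proof (N2_pos z) as H0. unfold N2 in *.
    pose proof (sqrt_sqrt _ H0) as Hs. pose proof (sqrt_pos (fst z ^ 2 + snd z ^ 2)). nra. }
  set (r := rr la lb delta).
  assert (Hr : 0 < r < 1).
  { unfold r, rr. split.
    - apply Rdiv_lt_0_compat; lra.
    - apply Rmult_lt_reg_r with (la + lb + delta); [lra|].
      unfold Rdiv. rewrite Rmult_assoc, Rinv_l by lra. lra. }
  assert (Hrz : N2 (Cmul (RtoC r) z) <= 1).
  { rewrite N2_mul. unfold N2 at 1. simpl. pose proof (N2_pos z). nra. }
  destruct (gconv _ _ _ _ HP Hz2) as [G HG].
  destruct (gconv _ _ _ _ HP Hrz) as [H HH].
  exists G, H. split; [exact HG|]. split; [exact HH|].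
  set (t := gterm pi0 pia pib z).
  set (s := zplus la lb gamma mua mub + zminus la lb gamma mua mub).
  set (p := zplus la lb gamma mua mub * zminus la lb gamma mua mub).
  set (S1 := Cshift (fun n => Cmul z (t n))).
  set (S2 := Cshift (fun n => Cmul z (S1 n))).
  assert (HS1 : Cseries_sum S1 (Cmul z G)) by (apply Cs_shift; apply Cs_mul; exact HG).
  assert (HS2 : Cseries_sum S2 (Cmul z (Cmul z G))) by (apply Cs_shift; apply Cs_mul; exact HS1).
  pose proof (Cs_add _ _ _ _
    (Cs_add _ _ _ _
      (Cs_add _ _ _ _
        (Cs_add _ _ _ _ (Cs_opp _ _ HS2) (Cs_mul (RtoC s) _ _ HS1))
        (Cs_opp _ _ (Cs_mul (RtoC p) _ _ HG)))
      (Cs_opp _ _ (Cs_shift _ _ (Cs_delta0 (Cmul (RtoC (vv la lb mua mub pi0)) z)))))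
    (Cs_delta0 (RtoC (ww la lb gamma mua mub pi0)))) as HT.
  pose proof (Cs_mul (RtoC (uu la lb mua mub)) _ _ HH) as HU.
  symmetry. eapply Cs_unique; [| exact HU].
  eapply Cs_val; [eapply Cs_ext; [| exact HT] |].
  - intros n.
    transitivity (Cmul (RtoC (ecoef la lb gamma mua mub pi0 pia pib n)) (Cpow z n)).
    + unfold S2, S1, t, gterm, ecoef. cbv zeta. fold s p.
      destruct n as [|[|m]]; simpl; destruct z as [a b]; try cring.
    + rewrite <- (coef _ _ _ _ _ _ _ _ _ Hla Hlb Hdelta Hgamma Hb n).
      unfold gterm. rewrite Cpow_scal. fold r.
      destruct (Cpow z n) as [x y]. cring.
  - unfold s, p. destruct z as [a b]. destruct G as [g1 g2]. cring.
Qed.
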